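(* Let $H$ be a graph with at least one edge, and suppose $H\cong H_1\times H_2$ where neither $H_1$ nor $H_2$ is isomorphic to $K_1^*$. Then $H$ is not projective.
   Context: Graphs are finite, undirected, without parallel edges, loops allowed; $K_1^*$ is the one-vertex graph with a loop. A homomorphism is an edge-preserving vertex map. The direct product $H_1\times H_2$ has vertex set $V(H_1)\times V(H_2)$ with $(x_1,y_1)(x_2,y_2)$ an edge iff $x_1x_2\in E(H_1)$ and $y_1y_2\in E(H_2)$; $H^m$ is the $m$-fold product and $\pi_i(x_1,\dots,x_m)=x_i$. A homomorphism $f\colon H^m\to H$ is idempotent if $f(x,\dots,x)=x$ for all $x$. $H$ is projective if for every $m\ge2$ every idempotent homomorphism $H^m\to H$ equals some $\pi_i$. *)

(* Defs.v *)
From mathcomp Require Import all_boot.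
Unset Printing Implicit Defensive.

(* A finite undirected graph without parallel edges, loops allowed:
   a finite vertex type with a symmetric (not necessarily irreflexive)
   adjacency relation. *)
Record graph := Graph {
  gV : finType;
  gE : rel gV;
  gE_sym : symmetric gE }.

Definition hom (G H : graph) (f : gV G -> gV H) : Prop :=
  forall x y, gE G x y -> gE H (f x) (f y).

Definition iso (G H : graph) : Prop :=
  exists f : gV G -> gV H, bijective f /\ forall x y, gE G x y = gE H (f x) (f y).

Definition has_edge (G : graph) : Prop := exists x y, gE G x y.

Lemma K1star_sym : symmetric (fun _ _ : unit => true). Proof. by []. Qed.
Definition K1star : graph := @Graph unit _ K1star_sym.

Definition prod_rel (G H : graph) : rel (gV G * gV H) :=
  fun x y => gE G x.1 y.1 && gE H x.2 y.2.
Lemma prod_rel_sym (G H : graph) : symmetric (prod_rel G H).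
Proof. by move=> x y; rewrite /prod_rel (gE_sym G (x.1)) (gE_sym H (x.2)). Qed.
Definition prodg (G H : graph) : graph := Graph _ _ (prod_rel_sym G H).

Definition pow_rel (G : graph) (m : nat) : rel {ffun 'I_m -> gV G} :=
  fun x y => [forall i, gE G (x i) (y i)].
Lemma pow_rel_sym (G : graph) (m : nat) : symmetric (pow_rel G m).
Proof.
move=> x y; apply/forallP/forallP=> H i; by rewrite gE_sym.
Qed.
Definition powg (G : graph) (m : nat) : graph := Graph _ _ (pow_rel_sym G m).

Definition idempotent_map (G : graph) (m : nat) (f : gV (powg G m) -> gV G) : Prop :=
  forall x : gV G, f [ffun _ : 'I_m => x] = x.

Definition projective (G : graph) : Prop :=
  forall m : nat, 2 <= m ->
  forall f : gV (powg G m) -> gV G, hom (powg G m) G f -> idempotent_map G m f ->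
  exists i : 'I_m, forall x : gV (powg G m), f x = x i.

(* Main.v *)
Require Import Defs.
From mathcomp Require Import all_boot.

Lemma single_iso (G : graph) (b : gV G) :
  gE G b b -> (forall y, y = b) -> iso G K1star.
Proof.
move=> hb hall; exists (fun _ => tt); split.
  by exists (fun _ => b) => [y|[]] //; rewrite (hall y).
by move=> x y /=; rewrite (hall x) (hall y) hb.
Qed.

Definition mk2 (T : finType) (u v : T) : {ffun 'I_2 -> T} :=
  [ffun i : 'I_2 => if val i == 0 then u else v].

Theorem mainTheorem9 (H H1 H2 : graph) :
  has_edge H -> iso H (prodg H1 H2) ->
  ~ iso H1 K1star -> ~ iso H2 K1star ->
  ~ projective H.
Proof.
move=> [u [v huv]] [phi [[psi phiK psiK] hE]] n1 n2 proj.
have hpsi : forall a c, gE (prodg H1 H2) a c -> gE H (psi a) (psi c).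
  by move=> a c hac; rewrite hE !psiK.
pose f := fun x : gV (powg H 2) =>
  psi ((phi (x ord0)).1, (phi (x (@Ordinal 2 1 isT))).2).
have hf : hom (powg H 2) H f.
  move=> x y /forallP hxy; apply: hpsi.
  have h0 := hxy ord0; have h1 := hxy (@Ordinal 2 1 isT).
  rewrite hE in h0; rewrite hE in h1.
  by move/andP: h0 => [h0 _]; move/andP: h1 => [_ h1]; rewrite /= /prod_rel /= h0 h1.
have fid : idempotent_map H 2 f.
  by move=> x; rewrite /f !ffunE -surjective_pairing phiK.
have euv : gE (prodg H1 H2) (phi u) (phi v) by rewrite -hE.
move/andP: euv => [e1 e2].
have [i hi] := proj 2 (leqnn 2) f hf fid.
case: i hi => [[|[|k]] Hi] //= hi.
- (* i = 0: H2 is a single vertex *)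
  have eqall : forall x0 x1, (phi x1).2 = (phi x0).2.
    move=> x0 x1; have := hi (@mk2 _ x0 x1).
    rewrite /f !ffunE /= => h.
    by have := congr1 (fun z => (phi z).2) h; rewrite /= psiK.
  rewrite (eqall u v) in e2.
  apply: n2; apply: (@single_iso H2 _ e2) => y.
  have := eqall v (psi ((phi u).1, y)); rewrite psiK /=.
  by move=> ->; have := eqall u v => ->.
- have eqall : forall x0 x1, (phi x0).1 = (phi x1).1.
    move=> x0 x1; have := hi (@mk2 _ x0 x1).
    rewrite /f !ffunE /= => h.
    by have := congr1 (fun z => (phi z).1) h; rewrite /= psiK.
  rewrite -(eqall u v) in e1.
  apply: n1; apply: (@single_iso H1 _ e1) => y.
  have := eqall (psi (y, (phi u).2)) u; rewrite psiK /=.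
  by [].
Qed.
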